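(* Let $p\equiv 1\pmod 4$ be a prime. For all $\delta_1,\delta_2\in\{\pm1\}$, the residue class \[ 2\det\left[\left(\tfrac{j+k}{p}\right)+\left(\tfrac{j-k}{p}\right)+\delta_1\left(\tfrac{j^2+\delta_2k^2}{p}\right)\right]_{0\le j,k\le (p-1)/2} \] is a nonzero quadratic residue modulo $p$. More precisely, writing $p=4m+1$, \[ \det\left[\left(\tfrac{j+k}{p}\right)+\left(\tfrac{j-k}{p}\right)+\delta_1\left(\tfrac{j^2+\delta_2k^2}{p}\right)\right]_{0\le j,k\le 2m} \equiv(-1)^{m(2m+1)}\delta_1^{2m+1}\delta_2^{m(2m+1)}\left(\prod_{r=0}^{2m}\binom{2m}{r}\right)\prod_{0\le i<j\le 2m}(j^2-i^2)^2\pmod p. \]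
   Context: $\left(\frac{t}{p}\right)$ denotes the Legendre symbol modulo $p$, with $\left(\frac{0}{p}\right)=0$. *)

(* Defs.v *)
From mathcomp Require Import all_boot all_order all_algebra.
Set Implicit Arguments. Unset Strict Implicit. Unset Printing Implicit Defensive.
Import Order.TTheory GRing.Theory Num.Theory.
Local Open Scope ring_scope.

Definition legendre (t : int) (p : nat) : int :=
  if (p%:Z %| t)%Z then 0
  else if [exists x : 'I_p, (p%:Z %| (x%:Z ^+ 2 - t))%Z] then 1 else -1.

Definition cor_mx (m p : nat) (d1 d2 : int) : 'M[int]_((2 * m).+1) :=
  \matrix_(j, k) (legendre (j%:Z + k%:Z) p + legendre (j%:Z - k%:Z) p
                  + d1 * legendre (j%:Z ^+ 2 + d2 * k%:Z ^+ 2) p).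

Definition cor_rhs (m : nat) (d1 d2 : int) : int :=
  (-1) ^+ (m * (2 * m).+1) * d1 ^+ (2 * m).+1 * d2 ^+ (m * (2 * m).+1)
  * (\prod_(r < (2 * m).+1) ('C(2 * m, r))%:Z)
  * \prod_(j < (2 * m).+1) \prod_(i < (2 * m).+1 | (i < j)%N)
      ((j%:Z ^+ 2 - i%:Z ^+ 2) ^+ 2).

(* Main.v *)
Require Import Defs.
From mathcomp Require Import all_boot all_order all_algebra all_field.
From mathcomp Require Import zify ring lra.
Import Order.TTheory GRing.Theory Num.Theory.
Local Open Scope ring_scope.

Lemma Fp_intr_eq0 p (hp : prime p) (z : int) :
  ((z%:~R : 'F_p) == 0) = (p%:Z %| z)%Z.
Proof.
rewrite dvdzE /=; case: z => n /=.
  by rewrite (dvdn_pcharf (pchar_Fp hp)).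
by rewrite NegzE rmorphN /= oppr_eq0 (dvdn_pcharf (pchar_Fp hp)).
Qed.

Lemma Fp_modz p (hp : prime p) (a b : int) :
  (a == b %[mod p%:Z])%Z = ((a%:~R : 'F_p) == b%:~R).
Proof. by rewrite eqz_mod_dvd -Fp_intr_eq0 // rmorphB /= subr_eq0. Qed.

Lemma Fp_fermat p (hp : prime p) (x : 'F_p) : x != 0 -> x ^+ p.-1 = 1.
Proof.
move=> x0; apply: (mulIf x0); rewrite mul1r -exprSr prednK ?prime_gt0 //.
by have := expf_card x; rewrite card_Fp.
Qed.

Lemma Fp_nat_eq p (hp : prime p) (a b : nat) : (a < p)%N -> (b < p)%N ->
  ((a%:R : 'F_p) == b%:R) = (a == b).
Proof.
move=> ap bp; apply/eqP/eqP => [|->] //.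
wlog ab : a b ap bp / (b <= a)%N.
  move=> H; case: (leqP b a) => [ba e|/ltnW ba e]; first exact: H.
  by apply/esym; apply: H => //; rewrite e.
move=> /eqP; rewrite -subr_eq0 -natrB // -(dvdn_pcharf (pchar_Fp hp)).
move=> /dvdn_leq; case: (ltnP b a) => [ba|]; last by move=> ba _; apply/eqP; rewrite eqn_leq ab ba.
have : (0 < a - b)%N by rewrite subn_gt0.
move=> h /(_ h) => h2; exfalso; move: h2; rewrite leqNgt.
by move/negP; apply; apply: leq_ltn_trans (leq_subr _ _) ap.
Qed.

Lemma intr_natF (R : pzRingType) (n : nat) : ((n%:Z)%:~R : R) = n%:R.
Proof. by []. Qed.

Lemma euler_Fp p m (hp : prime p) (hpm : p = (4 * m + 1)%N) (t : int) :
  ((legendre t p)%:~R : 'F_p) = (t%:~R) ^+ (2 * m).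
Proof.
have m0 : (0 < m)%N by case: m hpm => [|//] e; rewrite e in hp.
have pm1 : p.-1 = (2 * m * 2)%N by rewrite hpm addn1 /= mulnAC.
have pm2 : p.-1 = (2 * (2 * m))%N by rewrite pm1 mulnC.
rewrite /legendre; case: ifP => [dv|ndv].
  by rewrite (eqP (_ : t%:~R == 0 :> 'F_p)) ?Fp_intr_eq0 // expr0n muln_eq0 /= eqn0Ngt m0.
have t0 : t%:~R != 0 :> 'F_p by rewrite Fp_intr_eq0 // ndv.
case: ifP => [/existsP [x hx] | nex].
  move: hx; rewrite -Fp_intr_eq0 // rmorphB rmorphXn /= intr_natF subr_eq0 => /eqP tx.
  rewrite -tx -exprM -pm2 Fp_fermat //.
  by apply: contra t0; rewrite -tx => /eqP ->; rewrite expr0n.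
have : (t%:~R ^+ (2 * m) : 'F_p) ^+ 2 == 1 by rewrite -exprM -pm1 Fp_fermat.
rewrite sqrf_eq1 => /orP [/eqP u1 | /eqP ->]; last by [].
exfalso.
set rs := (t%:~R : 'F_p) :: [seq (i.+1%:R : 'F_p) ^+ 2 | i <- iota 0 (2 * m)].
suff : (size rs <= 2 * m)%N by rewrite /rs /= size_map size_iota ltnn.
apply: max_unity_roots; first by rewrite muln_gt0.
  rewrite /= unity_rootE u1 eqxx /=; apply/allP => y /mapP [i hi ->].
  move: hi; rewrite mem_iota /= add0n => hi.
  rewrite unity_rootE -exprM -pm2 Fp_fermat //.
  rewrite -(dvdn_pcharf (pchar_Fp hp)) gtnNdvd // hpm; lia.
rewrite /rs /= map_inj_in_uniq ?iota_uniq ?andbT; last first.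
  move=> a b; rewrite !mem_iota /= !add0n => ha hb /eqP.
  rewrite eqf_sqr => /orP [|/eqP e].
    rewrite (Fp_nat_eq _ hp); [by move/eqP => [->] | rewrite hpm; lia | rewrite hpm; lia].
  exfalso; have : (a.+1 + b.+1)%:R == 0 :> 'F_p by rewrite natrD e addNr.
  by rewrite -(dvdn_pcharf (pchar_Fp hp)) gtnNdvd // hpm; lia.
apply/mapP => -[i hi e]; move: hi; rewrite mem_iota /= add0n => hi.
move/negbT: nex; apply/negP/negPn/existsP.
have ip : (i.+1 < p)%N by rewrite hpm; lia.
exists (Ordinal ip); rewrite -Fp_intr_eq0 // rmorphB rmorphXn /= intr_natF.
by rewrite e subrr.
Qed.

Lemma det_rev (R : comPzRingType) n :
  \det (\matrix_(i < n, j < n) ((j:nat) == (n.-1 - i)%N)%:R : 'M[R]_n) = (-1) ^+ 'C(n, 2).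
Proof.
elim: n => [|n IH]; first by rewrite det_mx00.
rewrite (expand_det_row _ ord0) (bigD1 ord_max) //= big1 ?addr0; last first.
  move=> j /negbTE jn; rewrite mxE /= subn0.
  by rewrite (_ : (j:nat) == n = false) ?mul0r //; apply: contraFF jn => /eqP e; apply/eqP/val_inj.
rewrite mxE /= subn0 eqxx mul1r /cofactor /= add0n.
rewrite (_ : row' _ _ = \matrix_(i < n.+1.-1, j < n) ((j:nat) == (n.-1 - i)%N)%:R); last first.
  apply/matrixP => i j; rewrite !mxE /= /bump (leqNgt n j) ltn_ord add0n leq0n add1n (_ : (n - i.+1 = n.-1 - i)%N) //; lia.

by rewrite IH binS bin1 exprD mulrC.
Qed.

Lemma sum_delta (R : pzSemiRingType) n c (f : nat -> R) :
  \sum_(u < n) (((u:nat) == c)%:R * f u) = (c < n)%:R * f c.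
Proof.
elim: n => [|n IH]; first by rewrite big_ord0 ltn0 mul0r.
rewrite big_ord_recr /= IH ltnS; case: (ltngtP c n) => h.
- by rewrite mul0r addr0.
- by rewrite !mul0r addr0.
- by rewrite h mul0r add0r.
Qed.

Lemma sum_evenodd (R : nmodType) m (g : nat -> R) :
  \sum_(r < (2 * m).+1) g r = \sum_(s < m.+1) g (2 * s)%N + \sum_(s < m) g (2 * s).+1.
Proof.
elim: m => [|m IH]; first by rewrite !big_ord_recr !big_ord0 /= !add0r addr0.
rewrite (_ : (2 * m.+1).+1 = (2 * m).+1.+2)%N; last by lia.
rewrite big_ord_recr /= big_ord_recr /= IH [in RHS]big_ord_recr /=.
rewrite [X in _ = _ + X]big_ord_recr /=.
rewrite (_ : (2 * m.+1) = (2 * m).+2)%N; last by lia.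
by rewrite -!addrA; congr (_ + _); rewrite [RHS]addrC addrA.
Qed.

Lemma entry_id (R : comNzRingType) m (x y a b : R) :
  (x + y) ^+ (2 * m) + (x - y) ^+ (2 * m) + a * (x ^+ 2 + b * y ^+ 2) ^+ (2 * m) =
  \sum_(s < (2 * m).+1) ((x ^+ 2) ^+ (2 * m - s) * (a * b ^+ s * ('C(2 * m, s))%:R)
     + (s + m < (2 * m).+1)%:R * ((x ^+ 2) ^+ (m - s) * (2 * ('C(2 * m, 2 * s))%:R)))
     * (y ^+ 2) ^+ s.
Proof.
under eq_bigr do rewrite mulrDl.
rewrite big_split /= [LHS]addrC; congr (_ + _).
  rewrite exprDn mulr_sumr; apply: eq_bigr => s _.
  by rewrite [(b * _) ^+ _]exprMn -mulr_natr; ring.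
rewrite !exprDn -big_split /= (@sum_evenodd _ m (fun i => x ^+ (2 * m - i) * y ^+ i *+ 'C(2 * m, i) + x ^+ (2 * m - i) * (- y) ^+ i *+ 'C(2 * m, i))).
rewrite [X in _ + X = _]big1 ?addr0; last first.
  move=> s _; rewrite (exprS (- y)) (exprS y) [(- y) ^+ (2 * s)]exprM [y ^+ (2 * s)]exprM sqrrN.
  by rewrite mulNr mulrN mulNrn addrN.
set G := (fun s : nat => x ^+ (2 * m - 2 * s) * y ^+ (2 * s) *+ 'C(2 * m, 2 * s) +
   x ^+ (2 * m - 2 * s) * (- y) ^+ (2 * s) *+ 'C(2 * m, 2 * s)).
transitivity (\sum_(i < (2 * m).+1 | (i < m.+1)%N) G i).
  by apply: (big_ord_widen (2 * m).+1 G); lia.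
rewrite big_mkcond /=; apply: eq_bigr => s _.
have -> : (s + m < (2 * m).+1)%N = (s < m.+1)%N by apply/idP/idP; lia.
case: ifP => hs; last by rewrite mul0r mul0r.
rewrite /G [(- y) ^+ (2 * s)]exprM [y ^+ (2 * s)]exprM sqrrN -mulnBr [x ^+ (2 * _)]exprM. 
rewrite mul1r -[_ *+ 'C(_, _)]mulr_natr; ring.
Qed.

Lemma inner_RL (R : comNzRingType) m (x2 : R) (L : nat -> R) :
  \sum_(t < (2 * m).+1) x2 ^+ t * (\sum_(u < (2 * m).+1) (((u:nat) == (2 * m - t)%N)%:R * L u))
  = \sum_(t < (2 * m).+1) x2 ^+ (2 * m - t) * L t.
Proof.
rewrite (reindex_inj rev_ord_inj) /=; apply: eq_bigr => t _.
have ht : (t <= 2 * m)%N by rewrite -ltnS.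
rewrite subSS subKn // (@sum_delta _ (2 * m).+1 t L) ltn_ord mul1r //.
Qed.

Lemma inner_L (R : comNzRingType) m (x2 A B : R) (s : nat) : (s < (2 * m).+1)%N ->
  \sum_(t < (2 * m).+1) x2 ^+ (2 * m - t) * (((t:nat) == s)%:R * A + ((t:nat) == s + m)%:R * B)
  = x2 ^+ (2 * m - s) * A + (s + m < (2 * m).+1)%:R * (x2 ^+ (m - s) * B).
Proof.
move=> hs.
rewrite (eq_bigr (fun t : 'I_(2 * m).+1 => ((t:nat) == s)%:R * (x2 ^+ (2 * m - t) * A)
   + ((t:nat) == (s + m)%N)%:R * (x2 ^+ (2 * m - t) * B))); last first.
  by move=> t _; rewrite mulrDr [x2 ^+ _ * (_ * A)]mulrCA [x2 ^+ _ * (_ * B)]mulrCA.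
rewrite big_split /= (@sum_delta _ (2 * m).+1 s (fun t => x2 ^+ (2 * m - t) * A)).
rewrite (@sum_delta _ (2 * m).+1 (s + m)%N (fun t => x2 ^+ (2 * m - t) * B)) hs mul1r.
by rewrite (_ : (2 * m - (s + m) = m - s)%N) //; lia.
Qed.

Definition Wmx (R : nzRingType) n : 'M[R]_n := \matrix_(s < n, k < n) ((k%:R : R) ^+ 2) ^+ s.
Definition Rmx (R : nzRingType) n : 'M[R]_n := \matrix_(i < n, j < n) ((j:nat) == (n.-1 - i)%N)%:R.
Definition Lmx (R : nzRingType) m (a b : R) : 'M[R]_((2 * m).+1) :=
  \matrix_(u, s) (((u:nat) == s)%:R * (a * b ^+ s * ('C(2 * m, s))%:R)
                  + ((u:nat) == (s + m)%N)%:R * (2 * ('C(2 * m, 2 * s))%:R)).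

Lemma cor_factor p m (hp : prime p) (hpm : p = (4 * m + 1)%N) (d1 d2 : int) :
  map_mx (intmul (1:'F_p)) (cor_mx m p d1 d2) =
  (Wmx _ _)^T *m (Rmx _ _ *m Lmx _ m d1%:~R d2%:~R) *m Wmx _ _.
Proof.
apply/matrixP => j k; rewrite !mxE.
rewrite !rmorphD rmorphM /= !(euler_Fp _ _ hp hpm).
rewrite [(_ - _)%:~R]intrB [(j%:Z + _)%:~R]intrD [(_ ^+ 2 + _)%:~R]intrD !expr2 !intrM !intr_natF -!expr2.
rewrite (entry_id _ m); apply: eq_bigr => s _.
rewrite [Wmx _ _ s k]mxE mulrC [RHS]mulrC; congr (_ * _).
rewrite mxE.
under eq_bigr => t _ do rewrite !mxE.
under eq_bigr => t _ do under eq_bigr => u _ do rewrite !mxE.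
rewrite /= (inner_RL _ m (j%:R ^+ 2) (fun u => (u == s)%:R * (d1%:~R * d2%:~R ^+ s * ('C(2 * m, s))%:R) +
         (u == (s + m)%N)%:R * (2 * ('C(2 * m, 2 * s))%:R))).
by rewrite inner_L.
Qed.

Lemma det_W (R : comNzRingType) n :
  \det (Wmx R n) = \prod_(i < n) \prod_(j < n | (i < j)%N) ((j%:R : R) ^+ 2 - (i%:R) ^+ 2).
Proof.
have -> : Wmx R n = Vandermonde n (\row_(k < n) ((k%:R : R) ^+ 2)).
  by apply/matrixP => i j; rewrite !mxE.
rewrite det_Vandermonde; apply: eq_bigr => i _; apply: eq_bigr => j _.
by rewrite !mxE.
Qed.

Lemma det_L (R : comNzRingType) m (a b : R) : (0 < m)%N ->
  \det (Lmx R m a b) = a ^+ (2 * m).+1 * b ^+ (m * (2 * m).+1) * \prod_(s < (2 * m).+1) ('C(2 * m, s))%:R.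
Proof.
move=> m0; rewrite det_trig; last first.
  apply/is_trig_mxP => i j hij; rewrite mxE.
  rewrite (_ : ((i:nat) == j) = false); last by apply/eqP; lia.
  by rewrite (_ : ((i:nat) == (j + m)%N) = false) ?mul0r ?addr0 //; apply/eqP; lia.
have hs : forall s : nat, (s == (s + m)%N) = false by move=> s; apply/eqP; lia.
under eq_bigr => s _ do rewrite mxE eqxx mul1r hs mul0r addr0.
rewrite !big_split /= prodr_const card_ord prodrXr; congr (_ * _ ^+ _ * _).
rewrite -(big_mkord xpredT (fun i => i)) bin2_sum bin2odd; last by rewrite /= oddM.
have -> : ((2 * m).+1.-1./2 = m)%N by rewrite -pred_Sn mul2n doubleK.
by rewrite mulnC.
Qed.

Lemma intrXn (R : pzRingType) (z : int) n : ((z ^+ n)%:~R : R) = (z%:~R) ^+ n.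
Proof. exact: rmorphXn. Qed.

Lemma intr_prod (R : comNzRingType) (I : Type) (r : seq I) (P : pred I) (F : I -> int) :
  ((\prod_(i <- r | P i) F i)%:~R : R) = \prod_(i <- r | P i) (F i)%:~R.
Proof. exact: rmorph_prod. Qed.

Lemma binn2 m : 'C((2 * m).+1, 2) = (m * (2 * m).+1)%N.
Proof.
rewrite bin2odd; last by rewrite /= oddM.
have -> : ((2 * m).+1.-1./2 = m)%N by rewrite -pred_Sn mul2n doubleK.
by rewrite mulnC.
Qed.

Lemma prod_exch (R : comNzRingType) n (g : 'I_n -> 'I_n -> R) :
  \prod_(i < n) \prod_(j < n | (i < j)%N) g i j = \prod_(j < n) \prod_(i < n | (i < j)%N) g i j.
Proof.
under eq_bigr do rewrite big_mkcond.
rewrite exchange_big; apply: eq_bigr => j _.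
by rewrite [RHS]big_mkcond.
Qed.

Lemma rhs_F (R : comNzRingType) n :
  ((\prod_(j < n) \prod_(i < n | (i < j)%N) ((j%:Z ^+ 2 - i%:Z ^+ 2) ^+ 2))%:~R : R)
  = \prod_(j < n) \prod_(i < n | (i < j)%N) (((j%:R : R) ^+ 2 - i%:R ^+ 2) ^+ 2).
Proof.
rewrite rmorph_prod; apply: eq_bigr => j _; rewrite rmorph_prod; apply: eq_bigr => i _.
by rewrite /= intrXn intrB !intrXn.
Qed.

Lemma det_Fp p m (hp : prime p) (hpm : p = (4 * m + 1)%N) (d1 d2 : int) :
  ((\det (cor_mx m p d1 d2))%:~R : 'F_p) = (cor_rhs m d1 d2)%:~R.
Proof.
have m0 : (0 < m)%N by case: m hpm => [|//] e; rewrite e in hp.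
rewrite -det_map_mx cor_factor // !det_mulmx det_tr det_W /Rmx det_rev det_L //.
rewrite /cor_rhs !intrM !intrXn intr_prod.
rewrite rhs_F.
under [X in _ = _ * X]eq_bigr => j _ do rewrite prodrXl.
rewrite prodrXl -prod_exch binn2 rmorphN1.
have -> : \prod_(i < (2 * m).+1) ('C(2 * m, i) : int)%:~R = \prod_(i < (2 * m).+1) ('C(2 * m, i))%:R :> 'F_p.
  by apply: eq_bigr => i _; rewrite intr_natF.
ring.
Qed.

Lemma fact_sq p m (hp : prime p) (hpm : p = (4 * m + 1)%N) :
  (((2 * m)`!)%:R : 'F_p) ^+ 2 = -1.
Proof.
have hW : (((4 * m)`!)%:R : 'F_p) = -1.
  have := Wilson (prime_gt1 hp); rewrite hp => /esym.
  rewrite (dvdn_pcharf (pchar_Fp hp)) hpm addn1 /= => /eqP.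
  by rewrite -[((4 * m)`!).+1]addn1 natrD => /eqP; rewrite addr_eq0 => /eqP.
rewrite -hW -(ffact_fact (_ : 2 * m <= 4 * m)%N); last by lia.
rewrite (_ : (4 * m - 2 * m = 2 * m)%N); last by lia.
rewrite natrM expr2; congr (_ * _).
rewrite ffact_prod natr_prod.
rewrite (eq_bigr (fun i : 'I_(2 * m) => - ((i : nat).+1)%:R)); last first.
  move=> i _; apply/eqP; rewrite -addr_eq0 -natrD.
  rewrite (_ : (4 * m - i + i.+1 = p)%N); last by rewrite hpm; have := ltn_ord i; lia.
  by rewrite pchar_Fp_0.
rewrite prodrN card_ord (_ : (-1) ^+ (2 * m) = 1 :> 'F_p) ?mul1r; last by rewrite exprM sqrrN !expr1n.
rewrite -ffactnn ffact_prod natr_prod (reindex_inj rev_ord_inj) /=.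
by apply: eq_bigr => i _; congr (_ %:R); have := ltn_ord i; lia.
Qed.

Lemma binprod (R : comNzRingType) m :
  (\prod_(r < (2 * m).+1) ('C(2 * m, r))%:R : R) * (\prod_(r < (2 * m).+1) (r`!)%:R) ^+ 2
  = ((2 * m)`!%:R) ^+ (2 * m).+1.
Proof.
rewrite expr2 [X in _ * (_ * X)](reindex_inj rev_ord_inj) /= -!big_split /=.
transitivity (\prod_(r < (2 * m).+1) ((2 * m)`!%:R : R)); last by rewrite prodr_const card_ord.
apply: eq_bigr => r _; rewrite subSS -!natrM bin_fact //.
by rewrite -ltnS.
Qed.

Definition Qp p m : 'F_p :=
  \prod_(j < (2 * m).+1) \prod_(i < (2 * m).+1 | (i < j)%N) ((j%:R : 'F_p) ^+ 2 - i%:R ^+ 2).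

Lemma Q_neq0 p m (hp : prime p) (hpm : p = (4 * m + 1)%N) : Qp p m != 0.
Proof.
apply/prodf_neq0 => j _; apply/prodf_neq0 => i hij.
have hj := ltn_ord j; have hi := ltn_ord i.
rewrite subr_sqr mulf_neq0 //.
  rewrite subr_eq0 Fp_nat_eq //; first by rewrite neq_ltn hij orbT.
    by rewrite hpm; lia.
  by rewrite hpm; lia.
rewrite -natrD -(dvdn_pcharf (pchar_Fp hp)) gtnNdvd //; first by lia.
by rewrite hpm; lia.
Qed.

Lemma rhs_form p m (d1 d2 : int) :
  ((cor_rhs m d1 d2)%:~R : 'F_p) =
  ((-1) ^+ (m * (2 * m).+1) * d1%:~R ^+ (2 * m).+1 * d2%:~R ^+ (m * (2 * m).+1))
  * \prod_(r < (2 * m).+1) ('C(2 * m, r))%:R * Qp p m ^+ 2.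
Proof.
rewrite /cor_rhs !intrM !intrXn intr_prod rhs_F rmorphN1.
under [X in _ * X = _]eq_bigr => j _ do rewrite prodrXl.
rewrite prodrXl /Qp -prod_exch.
have -> : \prod_(i < (2 * m).+1) ('C(2 * m, i) : int)%:~R = \prod_(i < (2 * m).+1) ('C(2 * m, i))%:R :> 'F_p.
  by apply: eq_bigr => i _; rewrite intr_natF.
by [].
Qed.

Theorem corollary1p3 (m p : nat) (d1 d2 : int)
    (hp : prime p) (hpm : p = (4 * m + 1)%N)
    (hd1 : d1 = 1 \/ d1 = -1) (hd2 : d2 = 1 \/ d2 = -1) :
  (~~ (p%:Z %| 2 * \det (cor_mx m p d1 d2))%Z /\
   exists x : int, (x ^+ 2 == 2 * \det (cor_mx m p d1 d2) %[mod p%:Z])%Z)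
  /\ (\det (cor_mx m p d1 d2) == cor_rhs m d1 d2 %[mod p%:Z])%Z.
Proof.
have m0 : (0 < m)%N by case: m hpm => [|//] e; rewrite e in hp.
have hdet := det_Fp _ _ hp hpm d1 d2.
split; last by rewrite Fp_modz // hdet.
set D := ((\det (cor_mx m p d1 d2))%:~R : 'F_p).
set s0 := ((-1) ^+ (m * (2 * m).+1) * d1%:~R ^+ (2 * m).+1 * d2%:~R ^+ (m * (2 * m).+1)) : 'F_p.
set PC := \prod_(r < (2 * m).+1) (('C(2 * m, r))%:R : 'F_p).
set G := \prod_(r < (2 * m).+1) ((r`!)%:R : 'F_p).
set f := (((2 * m)`!)%:R : 'F_p).
set Q := Qp p m.
have hD : D = s0 * PC * Q ^+ 2 by rewrite /D hdet rhs_form.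
have hf : f ^+ 2 = -1 by exact: fact_sq.
have hb : PC * G ^+ 2 = f ^+ (2 * m).+1 by exact: binprod.
have f0 : f != 0.
  apply/eqP => f0; move: hf; rewrite f0 expr0n /= => /eqP; rewrite eq_sym oppr_eq0 oner_eq0.
  by [].
have PCG0 : PC * G ^+ 2 != 0 by rewrite hb expf_neq0.
have PC0 : PC != 0 by apply: contraNneq PCG0 => ->; rewrite mul0r.
have G0 : G != 0 by apply: contraNneq PCG0 => ->; rewrite expr0n mulr0.
have Q0 : Q != 0 by exact: Q_neq0.
have s0sq : s0 ^+ 2 = 1.
  rewrite /s0 !exprMn !(exprAC _ _ 2) sqrrN !expr1n mul1r.
  have hsq : forall d : int, d = 1 \/ d = -1 -> (d%:~R : 'F_p) ^+ 2 = 1.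
    by move=> d [->|->]; rewrite ?rmorph1 ?rmorphN1 ?sqrrN expr1n.
  by rewrite (hsq _ hd1) (hsq _ hd2) !expr1n !mulr1.
have s00 : s0 != 0 by apply: contra_eq_neq s0sq => ->; rewrite expr0n eq_sym oner_neq0.
have two0 : (2 : 'F_p) != 0.
  by rewrite -(dvdn_pcharf (pchar_Fp hp)) gtnNdvd //; rewrite hpm; lia.
set sg := s0 * (-1) ^+ m.
have sgsq : sg ^+ 2 = 1 by rewrite /sg exprMn s0sq sqrr_sign mul1r.
have h2D : 2 * D = 2 * sg * f * (Q / G) ^+ 2.
  rewrite hD /sg; have -> : PC = f ^+ (2 * m).+1 / G ^+ 2.
    by rewrite -hb mulfK // expf_neq0.
  rewrite exprS exprM hf; field; exact: G0.
pose y := (if sg == 1 then 1 else f) * (1 + f) * (Q / G).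
have hy : y ^+ 2 = 2 * D.
  rewrite h2D /y; have := sgsq; move/eqP; rewrite sqrf_eq1 => /orP [/eqP ->|/eqP ->].
    rewrite eqxx mul1r exprMn (_ : (1 + f) ^+ 2 = 1 + 2 * f + f ^+ 2); last by ring.
    by rewrite hf; ring.
  rewrite (_ : (-1 == 1 :> 'F_p) = false); last first.
    apply/negbTE; rewrite -subr_eq0 -opprD oppr_eq0.
    exact: two0.
  rewrite !exprMn (_ : (1 + f) ^+ 2 = 1 + 2 * f + f ^+ 2); last by ring.
  by rewrite hf; ring.
split.
  rewrite -Fp_intr_eq0 // intrM.
  rewrite (_ : ((2 : int)%:~R : 'F_p) = 2) //.
  rewrite mulf_neq0 // (_ : _%:~R = D) // hD.
  by apply: mulf_neq0; [apply: mulf_neq0|apply: expf_neq0].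
exists ((y : nat)%:Z).

rewrite Fp_modz // intrXn intr_natF natr_Zp intrM -/D hy.
by [].
Qed.
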